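(* For every finite simple graph $G$, $\mathrm{box}(G)=\mathrm{box}(CC(G))$.
   Context: An axis-parallel $t$-dimensional box is a Cartesian product $R_1\times\cdots\times R_t$ of closed real intervals $R_i=[a_i,b_i]$. The boxicity $\mathrm{box}(G)$ of a graph $G$ is the minimum integer $t$ such that $G$ is the intersection graph of axis-parallel $t$-dimensional boxes, i.e. there is a map $f$ from $V(G)$ to $t$-dimensional boxes with $(u,v)\in E(G)\iff f(u)\cap f(v)\neq\emptyset$ for distinct $u,v$. A critical clique of $G$ is a maximal clique of $G$ all of whose vertices have the same (closed) neighbourhood in $G$. The critical clique graph $CC(G)$ has one vertex for each critical clique of $G$, two such vertices being adjacent iff the union of the two corresponding critical cliques induces a clique in $G$. *)

(* Defs.v *)
From Stdlib Require Import Reals ClassicalEpsilon.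
From mathcomp Require Import all_boot.

Set Implicit Arguments.
Unset Strict Implicit.
Unset Printing Implicit Defensive.

(* A finite simple graph is a finType T with a symmetric irreflexive
   adjacency relation e : rel T. *)

Definition box_rep (T : finType) (e : rel T) (t : nat) : Prop :=
  exists (a b : T -> 'I_t -> R),
    (forall u i, Rle (a u i) (b u i)) /\
    (forall u v : T, u != v ->
       (e u v <->
        exists x : 'I_t -> R, forall i,
          (Rle (a u i) (x i) /\ Rle (x i) (b u i)) /\
          (Rle (a v i) (x i) /\ Rle (x i) (b v i)))).

Definition box_repb (T : finType) (e : rel T) : pred nat :=
  fun t => if excluded_middle_informative (box_rep e t) then true else false.

(* box(G) = the minimum t admitting a representation (0 if none exists,
   which never happens for finite graphs). *)
Definition boxicity (T : finType) (e : rel T) : nat :=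
  match excluded_middle_informative (exists t, box_repb e t) with
  | left h => ex_minn h
  | right _ => 0
  end.

Definition cnbhd (T : finType) (e : rel T) (x : T) : {set T} :=
  [set y | (y == x) || e x y].

Definition is_clique (T : finType) (e : rel T) (C : {set T}) : bool :=
  [forall x in C, forall y in C, (x != y) ==> e x y].

Definition same_cnbhd (T : finType) (e : rel T) (C : {set T}) : bool :=
  [forall x in C, forall y in C, cnbhd e x == cnbhd e y].

Definition critical_clique (T : finType) (e : rel T) (C : {set T}) : bool :=
  [&& C != set0, is_clique e C, same_cnbhd e C &
      [forall D : {set T}, (C \proper D) ==> ~~ (is_clique e D && same_cnbhd e D)]].

Definition cc_vertex (T : finType) (e : rel T) :=
  {C : {set T} | critical_clique e C}.

Definition cc_adj (T : finType) (e : rel T) : rel (cc_vertex e) :=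
  fun C D => (C != D) && is_clique e (val C :|: val D).
Arguments cc_adj {T} e.
Arguments boxicity {T} e.

(* Main.v *)
Require Import Defs.
From Stdlib Require Import Reals ClassicalEpsilon.
From mathcomp Require Import all_boot.

Set Implicit Arguments.
Unset Strict Implicit.
Unset Printing Implicit Defensive.

Lemma sameP (T : finType) (e : rel T) C x y :
  same_cnbhd e C -> x \in C -> y \in C -> cnbhd e x = cnbhd e y.
Proof.
move=> H xC yC.
by move: (forallP H x) => /implyP/(_ xC)/forallP/(_ y)/implyP/(_ yC)/eqP.
Qed.

Lemma cliqueP (T : finType) (e : rel T) C x y :
  is_clique e C -> x \in C -> y \in C -> x != y -> e x y.
Proof.
move=> H xC yC.
by move: (forallP H x) => /implyP/(_ xC)/forallP/(_ y)/implyP/(_ yC)/implyP.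
Qed.

Lemma same_clique (T : finType) (e : rel T) C :
  same_cnbhd e C -> is_clique e C.
Proof.
move=> H; apply/forallP=> x; apply/implyP=> xC; apply/forallP=> y.
apply/implyP=> yC; apply/implyP=> nxy.
have E := sameP H xC yC.
have : y \in cnbhd e y by rewrite inE eqxx.
by rewrite -E inE eq_sym (negbTE nxy).
Qed.

Lemma crit_sub (T : finType) (e : rel T) C D z :
  critical_clique e C -> critical_clique e D -> z \in C -> z \in D ->
  D \subset C.
Proof.
case/and4P=> _ _ sC mC; case/and4P=> _ _ sD _ zC zD.
set U := C :|: D.
have sU : same_cnbhd e U.
  apply/forallP=> x; apply/implyP=> xU; apply/forallP=> y; apply/implyP=> yU.
  have Nz w : w \in U -> cnbhd e w = cnbhd e z.
    rewrite inE => /orP[wC|wD]; [exact: sameP sC wC zC|exact: sameP sD wD zD].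
  by rewrite (Nz x xU) (Nz y yU).
have := forallP mC U; rewrite same_clique //= sU /= => /implyP Hn.
have : ~~ (C \proper U) by apply/negP=> /Hn.
rewrite properE subsetUl /= negbK => UC.
exact: subset_trans (subsetUr C D) UC.
Qed.

Lemma crit_eq (T : finType) (e : rel T) C D z :
  critical_clique e C -> critical_clique e D -> z \in C -> z \in D -> C = D.
Proof.
move=> cC cD zC zD; apply/eqP; rewrite eqEsubset.
by rewrite (crit_sub cC cD zC zD) (crit_sub cD cC zD zC).
Qed.

Lemma cc_adjE (T : finType) (e : rel T) (e_sym : symmetric e)
  (C D : cc_vertex e) x y :
  C != D -> x \in val C -> y \in val D -> cc_adj e C D = e x y.
Proof.
move=> CD xC yD; rewrite /cc_adj CD /=.
have cC := valP C; have cD := valP D.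
move: (cC) (cD) => /and4P[_ qC sC _] /and4P[_ qD sD _].
apply/idP/idP.
  move=> H; apply: (cliqueP H); rewrite ?inE ?xC ?yD ?orbT //.
  apply/eqP=> exy; subst y; apply: (negP CD); apply/eqP; apply: val_inj.
  exact: crit_eq cC cD xC yD.
move=> exy.
have cross u v : u \in val C -> v \in val D -> u != v -> e u v.
  move=> uC vD nuv.
  have Hy : y \in cnbhd e u by rewrite (sameP sC uC xC) inE exy orbT.
  have Hu : u \in cnbhd e v.
    rewrite (sameP sD vD yD) inE.
    move: Hy; rewrite inE => /orP[/eqP->|h]; first by rewrite eqxx.
    by rewrite e_sym h orbT.
  move: Hu; rewrite inE (negbTE nuv) /= => h; by rewrite e_sym.
apply/forallP=> u; apply/implyP=> uU; apply/forallP=> v; apply/implyP=> vU.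
apply/implyP=> nuv.
move: uU vU; rewrite !inE => /orP[uC|uD] /orP[vC|vD].
- exact: cliqueP qC uC vC nuv.
- exact: cross.
- by rewrite e_sym; apply: cross => //; rewrite eq_sym.
- exact: cliqueP qD uD vD nuv.
Qed.

Definition K (T : finType) (e : rel T) (u : T) : {set T} :=
  [set y | cnbhd e y == cnbhd e u].

Lemma K_crit (T : finType) (e : rel T) u : critical_clique e (K e u).
Proof.
have sK : same_cnbhd e (K e u).
  apply/forallP=> x; apply/implyP; rewrite inE => /eqP hx.
  apply/forallP=> y; apply/implyP; rewrite inE => /eqP hy.
  by rewrite hx hy.
apply/and4P; split => //.
- by apply/set0Pn; exists u; rewrite inE.
- exact: same_clique.
apply/forallP=> D; apply/implyP=> Hp; apply/negP=> /andP[_ sD].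
have uD : u \in D by apply: (subsetP (proper_sub Hp)); rewrite inE.
have DK : D \subset K e u.
  by apply/subsetP=> y yD; rewrite inE (sameP sD yD uD).
by move: Hp; rewrite properE DK andbF.
Qed.

Definition cl (T : finType) (e : rel T) (u : T) : cc_vertex e :=
  exist _ (K e u) (K_crit e u).

Lemma pick_some (T : finType) (e : rel T) (C : cc_vertex e) :
  exists2 x, [pick x in val C] = Some x & x \in val C.
Proof.
case: pickP => [x xC|H0]; first by exists x.
exfalso; move: (valP C) => /and4P[/set0Pn[y yC] _ _ _].
by move: (H0 y); rewrite yC.
Qed.

Lemma box_equiv (T : finType) (e : rel T) (e_sym : symmetric e) t :
  box_rep e t <-> box_rep (cc_adj e) t.
Proof.
split.
  case=> a [b [Hab Hr]].
  exists (fun (C : cc_vertex e) i => match [pick x in val C] with Some x => a x i | None => R0 end).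
  exists (fun (C : cc_vertex e) i => match [pick x in val C] with Some x => b x i | None => R0 end).
  split.
    move=> C i; case: pickP => [x _|_]; [exact: Hab|exact: Rle_refl].
  move=> C D CD.
  have [x hx xC] := pick_some C; have [y hy yD] := pick_some D.
  rewrite hx hy (cc_adjE e_sym CD xC yD); apply: Hr.
  apply/eqP=> exy; subst y; apply: (negP CD); apply/eqP; apply: val_inj.
  exact: crit_eq (valP C) (valP D) xC yD.
case=> a [b [Hab Hr]].
exists (fun u i => a (cl e u) i); exists (fun u i => b (cl e u) i).
split; first by move=> u i; apply: Hab.
move=> u v nuv.
case: (cl e u =P cl e v) => Heq.
  have uK : u \in K e v by have := f_equal val Heq; rewrite /= => <-; rewrite inE.
  move: uK; rewrite inE => /eqP Nuv.
  have euv : e u v.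
    have : v \in cnbhd e v by rewrite inE eqxx.
    by rewrite -Nuv inE eq_sym (negbTE nuv).
  rewrite euv; split => // _.
  exists (fun i => a (cl e u) i) => i; rewrite -Heq.
  split; split; (apply: Rle_refl || apply: Hab).
have uK : u \in val (cl e u) by rewrite inE.
have vK : v \in val (cl e v) by rewrite inE.
have CD : cl e u != cl e v by apply/eqP.
rewrite -(cc_adjE e_sym CD uK vK); exact: Hr.
Qed.

Lemma boxicity_eq (T1 T2 : finType) (e1 : rel T1) (e2 : rel T2) :
  (forall t, box_rep e1 t <-> box_rep e2 t) -> boxicity e1 = boxicity e2.
Proof.
move=> H.
have Hb : box_repb e1 =1 box_repb e2.
  move=> t; rewrite /box_repb.
  case: excluded_middle_informative => h1; case: excluded_middle_informative => h2 //.
  - by exfalso; apply: h2; apply/H.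
  - by exfalso; apply: h1; apply/H.
rewrite /boxicity.
case: excluded_middle_informative => h1; case: excluded_middle_informative => h2.
- case: ex_minnP => m1 Hm1 min1; case: ex_minnP => m2 Hm2 min2.
  have l1 : m1 <= m2 by apply: min1; rewrite Hb.
  have l2 : m2 <= m1 by apply: min2; rewrite -Hb.
  by apply/eqP; rewrite eqn_leq l1 l2.
- by exfalso; apply: h2; case: h1 => t ht; exists t; rewrite -Hb.
- by exfalso; apply: h1; case: h2 => t ht; exists t; rewrite Hb.
- by [].
Qed.

Theorem lemma3 (T : finType) (e : rel T)
  (e_sym : symmetric e) (e_irr : irreflexive e) :
  boxicity e = boxicity (cc_adj e).
Proof.
apply: boxicity_eq => t; exact: box_equiv.
Qed.
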